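(* Let $n$ be an even positive integer and $m \ge 2$ an integer, and let $G$ be the Random Integer Generation game with $n$ players and $m$ strategies (defined in the context). Let $\bar{\sigma}$ be the mixed strategy profile with $\bar{\sigma}_i = (1/m, 1/m, \dots, 1/m)$ for every player $i$, i.e. each player chooses a strategy in $\{0,1,\dots,m-1\}$ uniformly at random. Then $\bar{\sigma}$ is the only Nash equilibrium of $G$, and moreover $\bar{\sigma}$ is an alliance-resistant Nash equilibrium.
   Context: A one-shot game with $n$ players consists of finite pure-strategy sets $S_1,\dots,S_n$ and utility functions $u_i : S_1\times\cdots\times S_n \to \mathbb{R}$; players choose simultaneously and independently. A mixed strategy for player $i$ is a probability distribution $\sigma_i$ on $S_i$; a mixed strategy profile is $\sigma=(\sigma_1,\dots,\sigma_n)$, and $u_i(\sigma)$ denotes the expected utility when each $s_i$ is drawn independently from $\sigma_i$. A profile $\sigma$ is a Nash equilibrium if for every player $i$ and every mixed strategy $\tilde\sigma_i$ of player $i$, $u_i(\sigma) \ge u_i(\tilde\sigma_i, \sigma_{-i})$. A profile $\sigma$ is an alliance-resistant Nash equilibrium if for every non-empty set $P$ of players and every choice of mixed strategies $\tilde\sigma_P$ for the members of $P$, $u_P(\sigma) \ge u_P(\tilde\sigma_P, \sigma_{-P})$, where $u_P$ is the sum of the utilities of the members of $P$. The Random Integer Generation (RIG) game with $n$ players ($n$ even) and $m\ge 2$ strategies: each player $i\in\{1,\dots,n\}$ has pure strategy set $S_i=\{0,1,\dots,m-1\}$. Players are paired as $(2k-1, 2k)$ for $k=1,\dots,n/2$.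 At outcome $s=(s_1,\dots,s_n)$, player $2k-1$ receives $u_{2k-1}(s)=f(s_{2k-1},s_{2k})$ and player $2k$ receives $u_{2k}(s) = -f(s_{2k-1},s_{2k})$, where $f(a,b)=1$ if $a-b\equiv 0 \pmod m$, $f(a,b)=-1$ if $a-b\equiv -1 \pmod m$, and $f(a,b)=0$ otherwise. *)

(* Defs.v *)
From HB Require Import structures.
From mathcomp Require Import all_boot all_order all_algebra.
Set Implicit Arguments. Unset Strict Implicit. Unset Printing Implicit Defensive.
Import Order.TTheory GRing.Theory Num.Theory.
Local Open Scope ring_scope.

(* Players are 'I_n (0-indexed): paper's pair (2k-1,2k) is our pair (2k-2,2k-1),
   i.e. player i (even, 0-indexed) is paired with i+1, the "first" member. *)
Section RIG.
Variables (R : realFieldType) (n m : nat).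

Definition rig_f (a b : 'I_m) : R :=
  if (a %% m == b %% m)%N then 1
  else if (a.+1 %% m == b %% m)%N then -1 else 0.

Definition partner (i : 'I_n) : 'I_n :=
  insubd i (if odd i then i.-1 else i.+1)%N.

Definition rig_u (i : 'I_n) (s : {ffun 'I_n -> 'I_m}) : R :=
  if odd i then - rig_f (s (partner i)) (s i) else rig_f (s i) (s (partner i)).

Definition is_mixed (p : 'I_m -> R) : Prop :=
  (forall j, 0 <= p j) /\ \sum_(j < m) p j = 1.

Definition is_profile (sigma : 'I_n -> 'I_m -> R) : Prop :=
  forall i, is_mixed (sigma i).

Definition exp_u (sigma : 'I_n -> 'I_m -> R) (i : 'I_n) : R :=
  \sum_(s : {ffun 'I_n -> 'I_m}) (\prod_(k < n) sigma k (s k)) * rig_u i s.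

Definition deviate (sigma : 'I_n -> 'I_m -> R) (P : {set 'I_n})
  (tsigma : 'I_n -> 'I_m -> R) : 'I_n -> 'I_m -> R :=
  fun i => if i \in P then tsigma i else sigma i.

Definition is_nash (sigma : 'I_n -> 'I_m -> R) : Prop :=
  is_profile sigma /\
  forall (i : 'I_n) (t : 'I_m -> R), is_mixed t ->
    exp_u (deviate sigma [set i] (fun _ => t)) i <= exp_u sigma i.

Definition alliance_resistant (sigma : 'I_n -> 'I_m -> R) : Prop :=
  is_profile sigma /\
  forall (P : {set 'I_n}) (tsigma : 'I_n -> 'I_m -> R),
    P != set0 -> (forall i, i \in P -> is_mixed (tsigma i)) ->
    \sum_(i in P) exp_u (deviate sigma P tsigma) i <= \sum_(i in P) exp_u sigma i.

Definition uniform_profile : 'I_n -> 'I_m -> R := fun _ _ => (m%:R)^-1.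

End RIG.
Arguments uniform_profile R n m _ _ : clear implicits.

(* Main.v *)
Require Import Defs.
From HB Require Import structures.
From mathcomp Require Import all_boot all_order all_algebra.
From mathcomp Require Import zify lra.
Import Order.TTheory GRing.Theory Num.Theory.
Local Open Scope ring_scope.

Section H.
Variables (R : realFieldType) (n m : nat).

Lemma sum_ind (x : 'I_m) (X : 'I_m -> R) : \sum_b (x == b)%:R * X b = X x.
Proof.
rewrite (bigD1 x) //= eqxx mul1r big1 ?addr0 // => b /negbTE.
by rewrite eq_sym => ->; rewrite mul0r.
Qed.

Lemma prod_if (i : 'I_n) (X : 'I_n -> R) :
  \prod_k (if k == i then X k else 1) = X i.
Proof.
rewrite (bigD1 i) //= eqxx big1 ?mulr1 // => k /negbTE -> //.
Qed.

Lemma marg (F : 'I_n -> 'I_m -> R) (i j : 'I_n) (h : 'I_m -> 'I_m -> R) :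
  i != j -> (forall k, \sum_c F k c = 1) ->
  \sum_(s : {ffun 'I_n -> 'I_m}) (\prod_k F k (s k)) * h (s i) (s j) =
  \sum_a \sum_b F i a * F j b * h a b.
Proof.
move=> nij HF.
pose G a b k c := F k c * (if k == i then (c == a)%:R else 1) * (if k == j then (c == b)%:R else 1).
transitivity (\sum_a \sum_b h a b * \sum_(s : {ffun 'I_n -> 'I_m}) \prod_k G a b k (s k)).
  under eq_bigr => s _.
    have -> : h (s i) (s j) = \sum_a (s i == a)%:R * \sum_b (s j == b)%:R * h a b.
      by rewrite sum_ind sum_ind.
    rewrite big_distrr /=.
    under eq_bigr => a _ do rewrite big_distrr big_distrr /=.
    over.
  rewrite exchange_big /=; apply: eq_bigr => a _.
  rewrite exchange_big /=; apply: eq_bigr => b _.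
  rewrite big_distrr /=; apply: eq_bigr => s _.
  rewrite /G big_split big_split /= !prod_if /=.
  by rewrite [RHS]mulrC -!mulrA.
apply: eq_bigr => a _; apply: eq_bigr => b _.
rewrite -bigA_distr_bigA /=.
have -> : \prod_k \sum_c G a b k c =
   \prod_k ((if k == i then F i a else 1) * (if k == j then F j b else 1)).
  apply: eq_bigr => k _; rewrite /G.
  case: (eqVneq k i) => [->|ki].
    rewrite (negbTE nij) mulr1.
    under eq_bigr => c _ do rewrite mulr1 mulrC eq_sym.
    by rewrite sum_ind.
  case: (eqVneq k j) => [->|kj].
    under eq_bigr => c _ do rewrite mulr1 mulrC eq_sym.
    by rewrite sum_ind mul1r.
  under eq_bigr => c _ do rewrite !mulr1.
  by rewrite HF mulr1.
rewrite big_split /= !prod_if; by rewrite mulrC.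
Qed.


Hypothesis Hn : ~~ odd n.
Hypothesis Hm : (2 <= m)%N.

Lemma val_partner (i : 'I_n) : val (partner i) = (if odd i then i.-1 else i.+1)%N.
Proof.
rewrite /partner insubdK //; case: ifP => Hi.
  by have := ltn_ord i; lia.
have : i.+1 != n.
  by apply/eqP => E; move: Hn; rewrite -E /= Hi.
have := ltn_ord i; move=> h1 h2; change (i.+1 < n)%N; lia.
Qed.

Lemma partner_neq (i : 'I_n) : partner i != i.
Proof.
apply/negP => /eqP /(congr1 val); rewrite val_partner /=.
case: ifP => Hi; last lia.
by case: (nat_of_ord i) Hi => //= k _; lia.
Qed.

Lemma odd_partner (i : 'I_n) : odd (partner i) = ~~ odd i.
Proof.
rewrite val_partner; case: ifP => Hi /=; last by rewrite Hi.
by case: (nat_of_ord i) Hi => //= k /negbTE ->.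
Qed.

Lemma partnerK : involutive (@partner n).
Proof.
move=> i; apply: val_inj; rewrite val_partner odd_partner val_partner.
case Hi: (odd i) => //=; by case: (nat_of_ord i) Hi.
Qed.

Lemma rig_u_partner (i : 'I_n) (s : {ffun 'I_n -> 'I_m}) : rig_u R (partner i) s = - rig_u R i s.
Proof.
rewrite /rig_u odd_partner partnerK; case: (odd i) => /=; by rewrite ?opprK.
Qed.

Lemma exp_u_partner (sigma : 'I_n -> 'I_m -> R) (i : 'I_n) : exp_u sigma (partner i) = - exp_u sigma i.
Proof.
rewrite /exp_u -sumrN; apply: eq_bigr => s _; by rewrite rig_u_partner mulrN.
Qed.

Lemma rig_fE (a b : 'I_m) : rig_f R a b = (a == b)%:R - (ordS a == b)%:R.
Proof.
rewrite /rig_f (modn_small (ltn_ord a)) (modn_small (ltn_ord b)).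
have E : (ordS a == b) = (a.+1 %% m == b)%N by rewrite -val_eqE.
rewrite E val_eqE.
case: (eqVneq a b) => [->|ne].
  have -> : (b.+1 %% m == b)%N = false.
    apply/negbTE/eqP; have := ltn_ord b => hb.
    case: (ltngtP b.+1 m) => h; [rewrite modn_small // | lia | rewrite h modnn]; lia.
  by rewrite subr0.
rewrite add0r.
by case: ifP => _; rewrite ?oppr0.
Qed.

Lemma sum_rowf (p : 'I_m -> R) b :
  \sum_a p a * rig_f R a b = p b - p (ord_pred b).
Proof.
under eq_bigr => a _ do rewrite rig_fE mulrBr.
rewrite sumrB; congr (_ - _).
  by under eq_bigr => a _ do rewrite mulrC eq_sym; rewrite sum_ind.
rewrite (reindex_inj (@ord_pred_inj m)) /=.
under eq_bigr => a _ do rewrite ord_predK mulrC eq_sym.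
by rewrite sum_ind.
Qed.

Lemma sum_colf (q : 'I_m -> R) a :
  \sum_b q b * rig_f R a b = q a - q (ordS a).
Proof.
under eq_bigr => b _ do rewrite rig_fE mulrBr mulrC [q b * _]mulrC.
by rewrite sumrB !sum_ind.
Qed.

Definition hh (i : 'I_n) (a b : 'I_m) : R :=
  if odd i then - rig_f R b a else rig_f R a b.

Lemma sum_hh i a : \sum_b hh i a b = 0.
Proof.
rewrite /hh; case: (odd i).
  rewrite sumrN; have := sum_rowf (fun _ => 1) a; rewrite /=.
  under eq_bigr => b _ do rewrite mul1r. by move=> ->; rewrite subrr oppr0.
have := sum_colf (fun _ => 1) a; rewrite /=.
under eq_bigr => b _ do rewrite mul1r. by move=> ->; rewrite subrr.
Qed.

Lemma exp_uE (sigma : 'I_n -> 'I_m -> R) (i : 'I_n) : (forall k, \sum_c sigma k c = 1) ->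
  exp_u sigma i = \sum_a \sum_b sigma i a * sigma (partner i) b * hh i a b.
Proof.
move=> HF; rewrite /exp_u -marg //; last by rewrite eq_sym partner_neq.
Qed.

Lemma exp_u_unif (sigma : 'I_n -> 'I_m -> R) (i : 'I_n) : (forall k, \sum_c sigma k c = 1) ->
  sigma (partner i) = (fun _ => (m%:R)^-1) -> exp_u sigma i = 0.
Proof.
move=> HF Hp; rewrite exp_uE // Hp big1 // => a _.
under eq_bigr => b _ do rewrite -mulrA.
by rewrite -big_distrr /= -big_distrr /= sum_hh !mulr0.
Qed.

Lemma exp_u_unif' (sigma : 'I_n -> 'I_m -> R) (i : 'I_n) : (forall k, \sum_c sigma k c = 1) ->
  sigma i = (fun _ => (m%:R)^-1) -> exp_u sigma i = 0.
Proof.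
move=> HF Hp; rewrite -[i]partnerK exp_u_partner exp_u_unif ?oppr0 //.
by rewrite partnerK.
Qed.
End H.

Theorem mainTheorem1 (R : realFieldType) (n m : nat) :
  (0 < n)%N -> ~~ odd n -> (2 <= m)%N ->
  is_nash (uniform_profile R n m) /\
  (forall sigma : 'I_n -> 'I_m -> R, is_nash sigma -> forall i j, sigma i j = uniform_profile R n m i j) /\
  alliance_resistant (uniform_profile R n m).
Proof.
move=> n0 Hn Hm.
have EU := @exp_u_unif R n m Hn Hm.
have EU' := @exp_u_unif' R n m Hn Hm.
have EP := @exp_u_partner R n m Hn Hm.
have EE := @exp_uE R n m Hn Hm.
have PN := @partner_neq n m Hn Hm.
have PK := @partnerK n m Hn Hm.
have mnz : (m%:R : R) != 0 by rewrite pnatr_eq0; lia.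
have umix : is_mixed (fun _ : 'I_m => (m%:R : R)^-1).
  split => [j|]; first by rewrite invr_ge0 ler0n.
  by rewrite sumr_const card_ord -[_ *+ m]mulr_natr mulVf.
have uprof : is_profile (uniform_profile R n m) by move=> i; exact umix.
have sum1 (sigma : 'I_n -> 'I_m -> R) : is_profile sigma -> forall k, \sum_c sigma k c = 1.
  by move=> H k; case: (H k).
have devprof (sigma : 'I_n -> 'I_m -> R) (P : {set 'I_n}) (t : 'I_n -> 'I_m -> R) : is_profile sigma ->
    (forall i, i \in P -> is_mixed (t i)) -> is_profile (deviate sigma P t).
  move=> H1 H2 i; rewrite /deviate; case: ifP => hi; [exact: H2|exact: H1].
split.
  split=> // i t tm.
  rewrite !EU //; first by apply: sum1.
  - apply: sum1; apply: devprof => // k; rewrite in_set1 => /eqP ->; exact: tm.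
  - by rewrite /deviate in_set1 (negbTE (PN i)).
split.
  move=> sigma [sprof snash] i j0; rewrite /uniform_profile.
  set p := sigma i.
  have S1 := sum1 _ sprof.
  have e0 : 0 <= exp_u sigma i.
    move: (snash i _ umix); rewrite EU' //.
      apply: sum1; apply: devprof => // k; rewrite in_set1 => /eqP ->; exact: umix.
    by rewrite /deviate in_set1 eqxx.
  pose d (b : 'I_m) := fun c : 'I_m => ((b == c)%:R : R).
  have dmix b : is_mixed (d b).
    split => [c|]; first exact: ler0n.
    rewrite (bigD1 b) //= /d eqxx big1 ?addr0 // => c /negbTE.
    by rewrite eq_sym => ->.
  pose W b := exp_u (deviate sigma [set partner i] (fun _ => d b)) i.
  have WE b : W b = \sum_a p a * hh R n m i a b.
    rewrite /W EE; last first.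
      apply: sum1; apply: devprof => // k; rewrite in_set1 => /eqP ->; exact: dmix.
    have -> : deviate sigma [set partner i] (fun=> d b) (partner i) = d b.
      by rewrite /deviate in_set1 eqxx.
    have -> : deviate sigma [set partner i] (fun=> d b) i = p.
      by rewrite /deviate in_set1 eq_sym (negbTE (PN i)).
    apply: eq_bigr => a _.
    under eq_bigr => c _ do rewrite -mulrA.
    by rewrite -big_distrr /= sum_ind.
  have Wge b : 0 <= W b.
    move: (snash (partner i) _ (dmix b)); rewrite !EP -/(W b) lerN2 => h.
    exact: le_trans e0 h.
  have Wsum : \sum_b W b = 0.
    under eq_bigr => b _ do rewrite WE.
    rewrite exchange_big /= big1 // => a _.
    by rewrite -big_distrr /= sum_hh // mulr0.
  have W0 b : W b = 0 by apply: (psumr_eq0P (P := predT)) => // c _.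
  have step x : p (ordS x) = p x.
    case Hi: (odd i).
      have := W0 x; rewrite WE /hh Hi.
      under eq_bigr => a _ do rewrite mulrN.
      rewrite sumrN (@sum_colf R n m Hn Hm) //; lra.
    have := W0 (ordS x); rewrite WE /hh Hi (@sum_rowf R n m Hn Hm) // ordSK; lra.
  have m0 : (0 < m)%N by lia.
  have cst x : p x = p (Ordinal m0).
    suff H : forall k (hk : (k < m)%N), p (Ordinal hk) = p (Ordinal m0).
      by rewrite -(H x (ltn_ord x)); congr p; apply: val_inj.
    elim => [|k IH] hk; first by congr p; apply: val_inj.
    have hk' : (k < m)%N by lia.
    rewrite -(IH hk') -[RHS]step; congr p; apply: val_inj => /=; rewrite modn_small //.
  have := S1 i; rewrite -/p.
  under eq_bigr => z _ do rewrite (cst z).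
  rewrite sumr_const card_ord => h; rewrite -mulr_natr in h.
  rewrite cst; apply: (mulIf mnz); by rewrite h mulVf.
split=> // P t P0 tm.
have S' := sum1 _ (devprof _ P t uprof tm).
rewrite [X in _ <= X]big1 => [|i _]; last by apply: EU => //; apply: sum1.
rewrite (bigID (fun i => partner i \in P)) /=.
rewrite [X in _ + X]big1 => [|i /andP [_ hp]]; last first.
  by apply: EU => //; rewrite /deviate (negbTE hp).
set S := (X in X + 0).
have : S = - S.
  rewrite {1}/S (reindex_inj (inv_inj PK)) /= -sumrN.
  apply: eq_big => i; first by rewrite PK andbC.
  by move=> _; rewrite EP.
move=> h; rewrite addr0; lra.
Qed.
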